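(* Let $n$ be even, $1\le q_n\le n/2$, $I_n=\{(i_1,\dots,i_{q_n}):1\le i_1<\dots<i_{q_n}\le n\}$, and for $R=(i_1,\dots,i_{q_n})\in I_n$ let $\Psi_R=\psi_{i_1}\cdots\psi_{i_{q_n}}\,i^{\lfloor q_n/2\rfloor}$. Let $\alpha:[k]\to I_n$ and write $\Psi_\alpha=\Psi_{\alpha(1)}\cdots\Psi_{\alpha(k)}$. Then: (i) if every block of $\ker\alpha$ has even size, then $\Psi_\alpha=\pm I$; (ii) for every pair partition $\pi\in\mathcal{P}_2(k)$ with $\ker\alpha\ge\pi$, $$\operatorname{tr}(\Psi_\alpha)=(-1)^{q_n\,cr(\pi)+\sum|\alpha(V)\cap\alpha(W)|},$$ where the sum runs over all unordered pairs $\{V,W\}$ of crossing blocks of $\pi$.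
   Context: $\psi_1,\dots,\psi_n$ are Majorana fermions: $2^{n/2}\times2^{n/2}$ matrices with $\psi_i\psi_j+\psi_j\psi_i=2\delta_{ij}I$, realized as $\psi_j=\sigma_3^{\otimes(j-1)}\otimes\sigma_1\otimes 1^{\otimes(n/2-j)}$, $\psi_{n/2+j}=\sigma_3^{\otimes(j-1)}\otimes\sigma_2\otimes 1^{\otimes(n/2-j)}$ with Pauli matrices. $\operatorname{tr}$ is the normalized trace. $\ker\alpha$ is the partition of $[k]=\{1,\dots,k\}$ into nonempty level sets of $\alpha$; for a block $B$ of $\ker\alpha$ (or of a partition below it), $\alpha(B)$ is the common value of $\alpha$ on $B$. $\pi\le\sigma$ means every block of $\pi$ is contained in a block of $\sigma$. $\mathcal{P}_2(k)$ is the set of pair partitions of $[k]$; blocks $\{v_1<v_2\},\{w_1<w_2\}$ cross if $v_1<w_1<v_2<w_2$ or $w_1<v_1<w_2<v_2$, and $cr(\pi)$ is the number of crossing pairs of blocks. For $Q,R\in I_n$, $|Q\cap R|$ is the number of common indices. *)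

(* Defs.v *)
From HB Require Import structures.
From mathcomp Require Import all_boot all_order all_algebra all_field.
From mathcomp Require Import mxtens.
Set Implicit Arguments. Unset Strict Implicit. Unset Printing Implicit Defensive.
Import Order.TTheory GRing.Theory Num.Theory.
Local Open Scope ring_scope.

Definition sigma1 : 'M[algC]_2 := \matrix_(i < 2, j < 2) (if i == j then 0 else 1).
Definition sigma2 : 'M[algC]_2 :=
  \matrix_(i < 2, j < 2)
    (if i == j then 0 else if (i : nat) == 0%N then - 'i else 'i).
Definition sigma3 : 'M[algC]_2 :=
  \matrix_(i < 2, j < 2) (if i == j then (if (i : nat) == 0%N then 1 else -1) else 0).

Fixpoint kronf (m : nat) (f : nat -> 'M[algC]_2) : 'M[algC]_(2 ^ m) :=
  match m return 'M[algC]_(2 ^ m) with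
  | 0%N => 1%:M
  | m'.+1 => castmx (esym (expnS 2 m'), esym (expnS 2 m'))
                    (tensmx (f 0%N) (kronf m' (fun p => f p.+1)))
  end.

(* Majorana fermions psi_1..psi_n for n = 2m, indexed 0-based by 'I_n:
   index i (= psi_{i+1}) with i < m : sigma3^(i) (x) sigma1 (x) 1^(m-i-1);
   index i with i >= m, i' = i - m : sigma3^(i') (x) sigma2 (x) 1^(m-i'-1). *)
Definition majorana (n : nat) (i : 'I_n) : 'M[algC]_(2 ^ (n %/ 2)) :=
  let m := (n %/ 2)%N in
  if (i < m)%N then
    kronf m (fun p => if (p < i)%N then sigma3 else if p == i then sigma1 else 1%:M)
  else
    kronf m (fun p => if (p < i - m)%N then sigma3
                      else if p == (i - m)%N then sigma2 else 1%:M).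

Definition ntr (N : nat) (A : 'M[algC]_N) : algC := \tr A / N%:R.

(* Psi_R for R = {i_1 < ... < i_q} (a q-subset of the index set):
   psi_{i_1} ... psi_{i_q} * i^(floor(q/2)); enum R lists R increasingly. *)
Definition PsiR (n q : nat) (R : {set 'I_n}) : 'M[algC]_(2 ^ (n %/ 2)) :=
  ('i ^+ (q %/ 2)) *: \prod_(i <- enum R) majorana i.

Definition Psi_alpha (n q k : nat) (alpha : 'I_k -> {set 'I_n}) :
  'M[algC]_(2 ^ (n %/ 2)) := \prod_(j < k) PsiR q (alpha j).

Definition ker_blocks_even (n k : nat) (alpha : 'I_k -> {set 'I_n}) : Prop :=
  forall j : 'I_k, ~~ odd #|[set l | alpha l == alpha j]|.

Definition pair_partition (k : nat) (pi : {set {set 'I_k}}) : Prop :=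
  partition pi [set: 'I_k] /\ forall B, B \in pi -> #|B| = 2%N.

Definition ker_ge (n k : nat) (alpha : 'I_k -> {set 'I_n}) (pi : {set {set 'I_k}}) : Prop :=
  forall B, B \in pi -> forall x y, x \in B -> y \in B -> alpha x = alpha y.

(* alpha(B): the common value of alpha on the (nonempty) block B *)
Definition alpha_blk (n k : nat) (alpha : 'I_k -> {set 'I_n}) (B : {set 'I_k}) : {set 'I_n} :=
  if [pick x in B] is Some x then alpha x else set0.

Definition crosses (k : nat) (V W : {set 'I_k}) : bool :=
  [exists v1 : 'I_k, exists v2 : 'I_k, exists w1 : 'I_k, exists w2 : 'I_k,
     [&& V == [set v1; v2], W == [set w1; w2], (v1 < v2)%N, (w1 < w2)%N &
         ((v1 < w1 < v2)%N && (v2 < w2)%N) || ((w1 < v1 < w2)%N && (w2 < v2)%N)]].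

(* ordered pairs (V, W) of crossing blocks of pi; each unordered crossing
   pair {V, W} appears exactly twice, as (V, W) and (W, V). *)
Definition cross_pairs (k : nat) (pi : {set {set 'I_k}}) : {set {set 'I_k} * {set 'I_k}} :=
  [set VW | [&& VW.1 \in pi, VW.2 \in pi & crosses VW.1 VW.2]].

Definition cr (k : nat) (pi : {set {set 'I_k}}) : nat := (#|cross_pairs pi| %/ 2)%N.

Definition cross_overlap (n k : nat) (alpha : 'I_k -> {set 'I_n}) (pi : {set {set 'I_k}}) : nat :=
  ((\sum_(VW in cross_pairs pi)
      #|alpha_blk alpha VW.1 :&: alpha_blk alpha VW.2|) %/ 2)%N.

(* Main.v *)
Require Import Defs.
From HB Require Import structures.
From mathcomp Require Import all_boot all_order all_algebra all_field.
From mathcomp Require Import mxtens zify.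
Import Order.TTheory GRing.Theory Num.Theory.
Local Open Scope ring_scope.

Set Implicit Arguments. Unset Strict Implicit. Unset Printing Implicit Defensive.

Ltac pauli := apply/matrixP => - [[|[|?]] ?] [[|[|?]] ?] //; rewrite !mxE !big_ord_recr !big_ord0 /= !mxE /=;
  rewrite ?mulr0 ?mul0r ?mulr1 ?mul1r ?add0r ?addr0 ?mulN1r ?mulrN1 ?opprK ?oppr0 ?mulrN ?mulNr //;
  rewrite -?expr2 ?sqrCi ?opprK //.
Lemma s11 : sigma1 *m sigma1 = 1%:M. Proof. pauli. Qed.
Lemma s22 : sigma2 *m sigma2 = 1%:M. Proof. pauli. Qed.
Lemma s33 : sigma3 *m sigma3 = 1%:M. Proof. pauli. Qed.
Lemma s13 : sigma1 *m sigma3 = -1 *: (sigma3 *m sigma1). Proof. pauli. Qed.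
Lemma s23 : sigma2 *m sigma3 = -1 *: (sigma3 *m sigma2). Proof. pauli. Qed.
Lemma s12 : sigma1 *m sigma2 = -1 *: (sigma2 *m sigma1). Proof. pauli. Qed.

Lemma castmx_mulE (a b : nat) (e : a = b) (A B : 'M[algC]_a) :
  castmx (e, e) A *m castmx (e, e) B = castmx (e, e) (A *m B).
Proof. by case: b / e. Qed.
Lemma castmx_scaleE (a b : nat) (e : a = b) c (A : 'M[algC]_a) :
  castmx (e, e) (c *: A) = c *: castmx (e, e) A.
Proof. by case: b / e. Qed.
Lemma castmx_1E (a b : nat) (e : a = b) :
  castmx (e, e) (1%:M : 'M[algC]_a) = 1%:M.
Proof. by case: b / e. Qed.

Lemma tensmxZl m1 n1 m2 n2 c (A : 'M[algC]_(m1, n1)) (B : 'M[algC]_(m2, n2)) :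
  tensmx (c *: A) B = c *: tensmx A B.
Proof. by apply/matrixP => i j; rewrite !mxE mulrA. Qed.
Lemma tensmxZr m1 n1 m2 n2 c (A : 'M[algC]_(m1, n1)) (B : 'M[algC]_(m2, n2)) :
  tensmx A (c *: B) = c *: tensmx A B.
Proof. by apply/matrixP => i j; rewrite !mxE mulrCA. Qed.
Lemma tensmx11 m1 m2 : tensmx (1%:M : 'M[algC]_m1) (1%:M : 'M[algC]_m2) = 1%:M.
Proof.
apply/matrixP => i j.
case: (mxtens_indexP i) => i0 i1; case: (mxtens_indexP j) => j0 j1.
rewrite tensmxE !mxE (inj_eq (can_inj (@mxtens_indexK _ _))) xpair_eqE.
by case: eqP; case: eqP => //= _ _; rewrite ?mulr1 ?mulr0 ?mul0r.
Qed.

Lemma kronf_ext m f g : (forall p, (p < m)%N -> f p = g p) -> kronf m f = kronf m g.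
Proof.
elim: m f g => [|m IH] f g H //=.
rewrite H // (IH (fun p => f p.+1) (fun p => g p.+1)) // => p Hp.
by apply: H.
Qed.

Lemma kronf_mul m f g : kronf m f *m kronf m g = kronf m (fun p => f p *m g p).
Proof.
elim: m f g => [|m IH] f g /=; first by rewrite mul1mx.
by rewrite castmx_mulE tensmx_mul IH.
Qed.

Lemma kronf1 m : kronf m (fun _ => 1%:M) = 1%:M.
Proof.
elim: m => [|m IH] //=. by rewrite IH tensmx11 castmx_1E.
Qed.

Lemma kronf_scale m f r c : (r < m)%N ->
  kronf m (fun p => if p == r then c *: f p else f p) = c *: kronf m f.
Proof.
elim: m f r => [|m IH] f r // Hr /=.
case: r Hr => [|r] Hr /=.
  rewrite tensmxZl castmx_scaleE; congr (c *: castmx _ (tensmx _ _)); by [].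
rewrite (@kronf_ext m _ (fun p => if p == r then c *: f p.+1 else f p.+1)) //.
by rewrite IH // tensmxZr castmx_scaleE.
Qed.

Definition pf (b : bool) (r p : nat) : 'M[algC]_2 :=
  if (p < r)%N then sigma3 else if p == r then (if b then sigma1 else sigma2) else 1%:M.

Lemma majoranaE n (i : 'I_n) : majorana i =
  kronf (n %/ 2) (pf (i < n %/ 2)%N (if (i < n %/ 2)%N then (i : nat) else (i - n %/ 2)%N)).
Proof. by rewrite /majorana; case: ifP. Qed.

Lemma pf_sq b r p : pf b r p *m pf b r p = 1%:M.
Proof. by rewrite /pf; case: ifP => _; [|case: ifP => _; [case: b|]]; rewrite ?s11 ?s22 ?s33 ?mul1mx. Qed.

Lemma kron_sq m b r : kronf m (pf b r) *m kronf m (pf b r) = 1%:M.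
Proof. by rewrite kronf_mul (@kronf_ext _ _ (fun _ => 1%:M)) ?kronf1 // => p _; apply: pf_sq. Qed.

Lemma kron_anti m b1 r1 b2 r2 : (r1 < m)%N -> (r2 < m)%N -> (r1 != r2) || (b1 != b2) ->
  kronf m (pf b1 r1) *m kronf m (pf b2 r2) = - (kronf m (pf b2 r2) *m kronf m (pf b1 r1)).
Proof.
move=> H1 H2 Hne; rewrite !kronf_mul.
rewrite (@kronf_ext _ _ (fun p => if p == minn r1 r2 then -1 *: (pf b2 r2 p *m pf b1 r1 p)
                               else pf b2 r2 p *m pf b1 r1 p)).
  by rewrite kronf_scale ?scaleN1r // gtn_min H1.
move=> p _; rewrite /pf.
case: (ltngtP p r1) => Hp1; case: (ltngtP p r2) => Hp2.
all: try (have Hm : (p == minn r1 r2) = false by apply/negbTE; rewrite neq_ltn ?gtn_min ?ltn_min ?Hp1 ?Hp2 ?orbT).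
all: rewrite ?Hm ?mul1mx ?mulmx1 //.
all: subst.
all: rewrite ?eqxx ?ltnn /=.
- by rewrite (minn_idPr (ltnW Hp1)) eqxx; case: (b2); rewrite ?s13 ?s23 scalerA mulN1r opprK scale1r.
- by rewrite (minn_idPl (ltnW Hp2)) eqxx; case: (b1); rewrite ?s13 ?s23.
- by rewrite (minn_idPr (ltnW Hp2)) (gtn_eqF Hp2).
- rewrite minnn eqxx; rewrite eqxx /= in Hne.
  by case: b1 b2 Hne => -[] //= _; rewrite ?s12 // scalerA mulN1r opprK scale1r.
Qed.

Lemma maj_sq n (i : 'I_n) : majorana i *m majorana i = 1%:M.
Proof. by rewrite majoranaE kron_sq. Qed.

Lemma maj_anti n (i j : 'I_n) : ~~ odd n -> i != j ->
  majorana i *m majorana j = - (majorana j *m majorana i).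
Proof.
move=> Hn Hij; rewrite !majoranaE; have Hn2 : (n %% 2 = 0)%N by rewrite modn2 (negbTE Hn).
have Hv : (i : nat) <> j by move=> E; move/eqP: Hij; apply; apply: val_inj.
have Hi := ltn_ord i; have Hj := ltn_ord j.
apply: kron_anti.
- by case: ifP => H; lia.
- by case: ifP => H; lia.
case: ifP => H1; case: ifP => H2 //=; rewrite ?orbT //; apply/orP; left; apply/eqP; lia.
Qed.

Lemma signK (R : pzRingType) c (X : R) : (-1) ^+ c * ((-1) ^+ c * X) = X.
Proof. by rewrite mulrA -expr2 sqrr_sign mul1r. Qed.
Lemma sign_swap (R : pzRingType) c (X Y : R) : X * Y = (-1) ^+ c * (Y * X) -> Y * X = (-1) ^+ c * (X * Y).
Proof. by move=> ->; rewrite signK. Qed.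
Lemma signM (R : pzRingType) a b (X : R) : (-1) ^+ a * ((-1) ^+ b * X) = (-1) ^+ (a + b) * X.
Proof. by rewrite exprD mulrA. Qed.
Lemma signC (R : pzRingType) a (X Y : R) : X * ((-1) ^+ a * Y) = (-1) ^+ a * (X * Y).
Proof. by rewrite mulrA (commr_sign X) mulrA. Qed.

Section Gamma.
Variables (R : pzRingType) (I : eqType) (psi : I -> R).
Hypothesis Hsq : forall i, psi i * psi i = 1.
Hypothesis Hanti : forall i j, i != j -> psi i * psi j = - (psi j * psi i).

Lemma G1 j s : psi j * \prod_(i <- s) psi i =
  (-1) ^+ (count (predC1 j) s) * (\prod_(i <- s) psi i * psi j).
Proof.
elim: s => [|a s IH]; first by rewrite big_nil mulr1 mul1r expr0 mul1r.
rewrite big_cons /=.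
case: (eqVneq a j) => [->|Hne] /=.
  by rewrite add0n mulrA Hsq mul1r -mulrA (sign_swap IH) signC signK mulrA Hsq mul1r.
rewrite mulrA Hanti 1?eq_sym // add1n exprS -mulN1r -mulrA.
by rewrite -!mulrA IH signC.
Qed.

Lemma G2 s t : \prod_(i <- s) psi i * \prod_(i <- t) psi i =
  (-1) ^+ (\sum_(j <- s) count (predC1 j) t) * (\prod_(i <- t) psi i * \prod_(i <- s) psi i).
Proof.
elim: s => [|a s IH]; first by rewrite !big_nil mulr1 mul1r.
rewrite !big_cons -mulrA IH signC (mulrA (psi a)) G1 -(mulrA ((-1) ^+ _)) signM addnC.
by rewrite !mulrA.
Qed.

Lemma G3 s : uniq s -> \prod_(i <- s) psi i * \prod_(i <- s) psi i = (-1) ^+ 'C(size s, 2).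
Proof.
elim: s => [|a s IH]; first by rewrite big_nil mulr1 expr0.
rewrite cons_uniq => /andP[Ha Hu]; rewrite big_cons /=.
have Hc : count (predC1 a) s = size s.
  by rewrite -(count_predC (pred1 a) s) count_uniq_mem // (negbTE Ha).
rewrite -mulrA (mulrA (\prod_(i <- s) psi i)) (sign_swap (G1 a s)) Hc.
rewrite -(mulrA ((-1) ^+ _)) signC -(mulrA (psi a)) (mulrA (psi a) (psi a)) Hsq mul1r (IH Hu) -exprD.
by rewrite binS bin1 addnC.
Qed.
End Gamma.


Lemma half_bin_even q : ~~ odd (q %/ 2 + 'C(q, 2)).
Proof.
elim/ltn_ind: q => -[|[|q]] IH //.
have E1 : 'C(q.+2, 2) = ('C(q, 2) + (q + q.+1))%N by rewrite !binS !bin1 bin0; lia.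
have E2 : (q.+2 %/ 2 = q %/ 2 + 1)%N by rewrite -addn2 divnDr ?dvdnn // divnn.
rewrite E1 E2 addnACA oddD (negbTE (IH q (ltnW (ltnSn _)))) /=.
by rewrite add0n addnS oddS addnn odd_double.
Qed.

Lemma signZ N k (X : 'M[algC]_N) : ((-1) ^+ k : algC) *: X = (-1) ^+ k * X.
Proof.
elim: k => [|k IH]; first by rewrite !expr0 scale1r; symmetry; apply: mul1mx.
by rewrite !exprS !mulN1r scaleNr IH mulNr.
Qed.

Lemma scZl N c (A B : 'M[algC]_N) : (c *: A) * B = c *: (A * B).
Proof. exact: (esym (scalemxAl c A B)). Qed.
Lemma scZr N c (A B : 'M[algC]_N) : A * (c *: B) = c *: (A * B).
Proof. exact: (esym (scalemxAr c A B)). Qed.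

Section PsiLemmas.
Variables (n q : nat).
Hypothesis Hn : ~~ odd n.
Local Notation N := (2 ^ (n %/ 2))%N.
Local Notation Gam R := (\prod_(i <- enum R) (@majorana n i : 'M[algC]_N)).

Lemma maj_sqR (i : 'I_n) : (majorana i : 'M[algC]_N) * majorana i = 1.
Proof. exact: maj_sq. Qed.
Lemma maj_antiR (i j : 'I_n) : i != j ->
  (majorana i : 'M[algC]_N) * majorana j = - (majorana j * majorana i).
Proof. exact: maj_anti. Qed.

Lemma ii_sq : ('i ^+ (q %/ 2) * 'i ^+ (q %/ 2) : algC) = (-1) ^+ (q %/ 2).
Proof. by rewrite -exprD addnn -mul2n exprM sqrCi. Qed.

Lemma PsiR_sq (R : {set 'I_n}) : #|R| = q -> PsiR q R * PsiR q R = 1.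
Proof.
move=> HR; rewrite /PsiR scZl scZr scalerA ii_sq.
rewrite (G3 maj_sqR maj_antiR (enum_uniq _)) -cardE HR signZ -exprD.
by rewrite -signr_odd (negbTE (half_bin_even q)) expr0.
Qed.

Lemma count_exp (R S : {set 'I_n}) : #|S| = q ->
  odd (\sum_(j <- enum R) count (predC1 j) (enum S)) = odd (q * #|R| + #|R :&: S|).
Proof.
move=> HS.
have E : forall j, count (predC1 j) (enum S) = (q - (j \in S))%N.
  move=> j; rewrite -HS cardE -(count_predC (pred1 j) (enum S)) count_uniq_mem ?enum_uniq //.
  by rewrite mem_enum addKn.
have E2 : (\sum_(j <- enum R) count (predC1 j) (enum S) + #|R :&: S| = #|R| * q)%N.
  rewrite (eq_bigr _ (fun j _ => E j)) big_enum -sum1_card.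
  have -> : (\sum_(i in R :&: S) 1 = \sum_(i in R) (i \in S : nat))%N.
    rewrite big_mkcond [RHS]big_mkcond; apply: eq_bigr => i _.
    by rewrite in_setI; case: (i \in R); case: (i \in S).
  rewrite -big_split /= -sum_nat_const; apply: eq_bigr => i _.
  case: (boolP (i \in S)) => Hi; last by rewrite subn0 addn0.
  by rewrite subnK // -HS card_gt0; apply/set0Pn; exists i.
have := congr1 odd E2; rewrite oddD !oddM oddD mulnC.
rewrite oddM; move: (odd (\sum_(j <- enum R) count (predC1 j) (enum S))) (odd q) (odd #|R|) (odd #|R :&: S|) => a b c d.
by case: a; case: b; case: c; case: d.
Qed.

Lemma PsiR_comm (R S : {set 'I_n}) : #|R| = q -> #|S| = q ->
  PsiR q R * PsiR q S = (-1) ^+ (q + #|R :&: S|) * (PsiR q S * PsiR q R).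
Proof.
move=> HR HS; rewrite /PsiR !scZl !scZr (G2 maj_sqR maj_antiR) ?scZr.
rewrite -signr_odd count_exp // HR oddD oddM andbb -oddD signr_odd.
done.
Qed.
End PsiLemmas.


Lemma ltF (a b : nat) : (a < b)%N -> (b < a)%N = false. Proof. move=> H; apply/negbTE; rewrite -leqNgt ltnW //. Qed.
Lemma leF (a b : nat) : (a <= b)%N -> (b < a)%N = false. Proof. by move=> H; apply/negbTE; rewrite -leqNgt. Qed.

Section Comb.
Variables (R : pzRingType) (k : nat) (x : 'I_k -> R) (e : 'I_k -> 'I_k -> nat).
Hypothesis Hx2 : forall a, x a * x a = 1.
Hypothesis Hc : forall a c, x a * x c = (-1) ^+ (e a c) * (x c * x a).

Lemma L1 a u : x a * \prod_(j <- u) x j =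
  (-1) ^+ (\sum_(j <- u) e a j) * (\prod_(j <- u) x j * x a).
Proof.
elim: u => [|b u IH]; first by rewrite !big_nil mulr1 mul1r expr0 mul1r.
rewrite !big_cons mulrA Hc -!mulrA IH signC signM.
by rewrite !mulrA.
Qed.

Section PartA.
Variables (T : eqType) (alpha : 'I_k -> T).
Hypothesis Hxeq : forall a b, alpha a = alpha b -> x a = x b.

Lemma partA s : (forall j, ~~ odd (count (fun l => alpha l == alpha j) s)) ->
  exists m, \prod_(j <- s) x j = (-1) ^+ m.
Proof.
move: {2}(size s) (leqnn (size s)) => N; elim: N s => [|N IH] s Hs Hev.
  by case: s Hs Hev => // _ _; exists 0%N; rewrite big_nil expr0.
case: s Hs Hev => [|a t] Hs Hev; first by exists 0%N; rewrite big_nil expr0.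
have Ho : odd (count (fun l => alpha l == alpha a) t).
  by have := Hev a; rewrite /= eqxx add1n oddS negbK.
have : has (fun l => alpha l == alpha a) t by rewrite has_count; case: (count _ t) Ho.
case/hasP => b Hb /eqP Eb.
case/splitPr: Hb Hs Hev => u v Hs Hev.
have [m Hm] : exists m, \prod_(j <- u ++ v) x j = (-1) ^+ m.
  apply: IH.
    by move: Hs; rewrite /= !size_cat /=; lia.
  move=> j; have := Hev j; rewrite /= !count_cat /= Eb.
  move: (count _ u) (count _ v) (alpha a == alpha j) => c1 c2 [|]; last by rewrite !add0n.
  by rewrite add1n oddS addnS oddS negbK.
exists (\sum_(j <- u) e a j + m)%N.
rewrite big_cons big_cat big_cons /= mulrA L1 (Hxeq Eb) -mulrA -!mulrA (mulrA (x a)) Hx2 mul1r.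
by rewrite -big_cat Hm exprD.
Qed.
End PartA.

Lemma sum_cond_in (w : seq 'I_k) (P1 P2 : pred 'I_k) (f : 'I_k -> nat) :
  {in w, P1 =1 P2} -> (\sum_(c <- w | P1 c) f c = \sum_(c <- w | P2 c) f c)%N.
Proof. by move=> H; rewrite -big_filter -[RHS]big_filter (eq_in_filter H). Qed.
Lemma sum0_in (w : seq 'I_k) (P1 : pred 'I_k) (f : 'I_k -> nat) :
  {in w, forall c, P1 c = false} -> (\sum_(c <- w | P1 c) f c = 0)%N.
Proof. by move=> H; rewrite -big_filter (@eq_in_filter _ _ pred0) ?filter_pred0 ?big_nil. Qed.

Section PartB.
Variable p : 'I_k -> 'I_k.
Hypothesis Hpp : forall a, p (p a) = a.
Hypothesis Hpn : forall a, p a != a.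
Hypothesis Hxp : forall a, x (p a) = x a.
Hypothesis Hep : forall a c, e a (p c) = e a c.

Definition ltO (a b : 'I_k) := (a < b)%N.
Definition Cr (a c : 'I_k) := [&& (a < c)%N, (c < p a)%N & (p a < p c)%N].
Definition Nsum (s : seq 'I_k) := (\sum_(a <- s) \sum_(c <- s | Cr a c) e a c)%N.

Lemma pinj : injective p. Proof. exact: (can_inj Hpp). Qed.

Lemma even_sum (w : seq 'I_k) (f : 'I_k -> nat) : uniq w -> {in w, forall c, p c \in w} ->
  (forall c, f (p c) = f c) ->
  (\sum_(c <- w) f c = 2 * \sum_(c <- w | (c < p c)%N) f c)%N.
Proof.
move=> Hu Hcl Hf; rewrite (bigID (fun c : 'I_k => (c < p c)%N)) /=.
have -> : (\sum_(c <- w | ~~ (c < p c)%N) f c = \sum_(c <- w | (c < p c)%N) f c)%N.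
  have Hperm : perm_eq w (map p w).
    apply: uniq_perm => //; first by rewrite (map_inj_uniq pinj).
    move=> c; apply/idP/mapP => [Hc0|[d Hd ->]]; last exact: Hcl.
    by exists (p c); [apply: Hcl | rewrite Hpp].
  rewrite (perm_big _ Hperm) big_map; apply: eq_big => c; last by rewrite Hf.
  rewrite Hpp -leqNgt leq_eqVlt.
  suff -> : (c == p c :> nat) = false by [].
  by apply/negbTE; have := Hpn c; apply: contra => /eqP E; apply/eqP/val_inj.
by rewrite addnn mul2n.
Qed.

Lemma partB s : pairwise ltO s -> {in s, forall j, p j \in s} ->
  \prod_(j <- s) x j = (-1) ^+ (Nsum s).
Proof.
move: {2}(size s) (leqnn (size s)) => N; elim: N s => [|N IH] s Hs.
  by case: s Hs => // _ _ _; rewrite big_nil /Nsum big_nil expr0.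
case: s Hs => [|a0 t] Hs Hpw Hcl; first by rewrite big_nil /Nsum big_nil expr0.
have Hu : uniq (a0 :: t) by apply: (pairwise_uniq _ Hpw) => a; rewrite /ltO ltnn.
have Hb0 : p a0 \in t.
  have := Hcl a0 (mem_head _ _); rewrite in_cons (negbTE (Hpn a0)) //.
move: Hpw Hcl Hu Hs; case/splitPr: Hb0 => u v; set b0 := p a0.
rewrite pairwise_cons pairwise_cat pairwise_cons allrel_consr => Hpw Hcl Hu Hs.
case/andP: Hpw => /allP F1 /and3P[/andP[/allP F2 Huv] Hpu /andP[/allP F3 Hpv]].
have F1' : forall c, c \in u ++ b0 :: v -> (a0 < c)%N by move=> c /F1.
have F2' : forall c, c \in u -> (c < b0)%N by move=> c /F2.
have F3' : forall c, c \in v -> (b0 < c)%N by move=> c /F3.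
have Hsmin : forall c, c \in a0 :: u ++ b0 :: v -> (a0 <= c)%N.
  by move=> c; rewrite in_cons => /orP[/eqP -> //|/F1' /ltnW].
have Hnb0 : b0 \notin u ++ v.
  rewrite mem_cat; apply/norP; split; apply/negP.
    by move=> /F2'; rewrite ltnn.
  by move=> /F3'; rewrite ltnn.
have Hna0 : a0 \notin u ++ v.
  apply/negP => H; suff : (a0 < a0)%N by rewrite ltnn.
  by apply: F1'; move: H; rewrite !mem_cat in_cons => /orP[->|->]; rewrite ?orbT.
have Hcl' : {in u ++ v, forall j, p j \in u ++ v}.
  move=> j Hj; have Hjs : j \in a0 :: u ++ b0 :: v.
    by move: Hj; rewrite in_cons !mem_cat in_cons => /orP[->|->]; rewrite ?orbT.
  move: (Hcl j Hjs); rewrite in_cons mem_cat in_cons.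
  move=> /orP[/eqP E|/orP[H|/orP[/eqP E|H]]]; rewrite ?mem_cat ?H ?orbT //.
    have Ej : j = b0 by rewrite -(Hpp j) E.
    by move: Hnb0; rewrite -Ej Hj.
  have Ej : j = a0 by rewrite -(Hpp j) E /b0 Hpp.
  by move: Hna0; rewrite -Ej Hj.
have Huv_s : forall c, c \in u ++ v -> c \in u ++ b0 :: v.
  by move=> c; rewrite !mem_cat in_cons => /orP[->|->]; rewrite ?orbT.
have Hu_s : forall c, c \in u -> c \in u ++ v by move=> c Hc1; rewrite mem_cat Hc1.
have Hv_s : forall c, c \in v -> c \in u ++ v by move=> c Hc1; rewrite mem_cat Hc1 orbT.
have Hpw' : pairwise ltO (u ++ v) by rewrite pairwise_cat Huv Hpu Hpv.
have HIH := IH (u ++ v) ltac:(by move: Hs; rewrite /= !size_cat /=; lia) Hpw' Hcl'.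
rewrite big_cons big_cat big_cons /= mulrA L1 -mulrA -(mulrA (\prod_(j <- u) x j)).
rewrite (mulrA (x a0)) /b0 Hxp Hx2 mul1r -big_cat HIH -exprD -/b0.
set X := (\sum_(c <- u | (b0 < p c)%N) e a0 c)%N.
have Hev : ~~ odd (\sum_(j <- u | ~~ (b0 < p j)%N) e a0 j).
  rewrite -big_filter even_sum ?oddM //.
  - by rewrite filter_uniq //; apply: (pairwise_uniq _ Hpu) => a; rewrite /ltO ltnn.
  - move=> c; rewrite mem_filter => /andP[Hc1 Hcu].
    have Hpc : p c \in u.
      move: (Hcl' c (Hu_s c Hcu)); rewrite mem_cat => /orP[//|Hv].
      by move: (F3' _ Hv) Hc1 => ->.
    by rewrite mem_filter Hpc Hpp -leqNgt ltnW // F2'.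
have Ga0 : (\sum_(c <- a0 :: u ++ b0 :: v | Cr a0 c) e a0 c = X)%N.
  rewrite big_cons /Cr ltnn /= big_cat big_cons /= -/b0 ltnn andbF /=.
  rewrite (@sum0_in v) ?addn0; last by move=> c /F3' Hc1; rewrite -/b0 (ltF Hc1) andbF.
  apply: sum_cond_in => c Hc1; rewrite -/b0 F1' ?F2' //; exact: Huv_s (Hu_s c Hc1).
have Gb0 : (\sum_(c <- a0 :: u ++ b0 :: v | Cr b0 c) e b0 c = 0)%N.
  by apply: sum0_in => c /Hsmin Hc1; rewrite /Cr /b0 Hpp (leF Hc1) andbF.
have Ga : {in u ++ v, forall a, (\sum_(c <- a0 :: u ++ b0 :: v | Cr a c) e a c =
                                 \sum_(c <- u ++ v | Cr a c) e a c)%N}.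
  move=> a Ha; rewrite big_cons /Cr (ltF (F1' _ (Huv_s _ Ha))) /=.
  rewrite big_cat big_cons /= /b0 Hpp -/b0 (ltF (F1' _ (Huv_s _ (Hcl' _ Ha)))) !andbF /=.
  by rewrite big_cat.
have HN : Nsum (a0 :: u ++ b0 :: v) = (X + Nsum (u ++ v))%N.
  rewrite /Nsum big_cons Ga0 big_cat big_cons /= Gb0 add0n -big_cat /=.
  by congr (_ + _)%N; apply: eq_big_seq.
rewrite HN (bigID (fun c : 'I_k => (b0 < p c)%N)) /= -/X -[LHS]signr_odd -[RHS]signr_odd.
by rewrite !oddD (negbTE Hev) addbF.
Qed.
End PartB.
End Comb.


Lemma set2eq k (a b v1 v2 : 'I_k) : (a < b)%N -> (v1 < v2)%N ->
  [set a; b] = [set v1; v2] -> a = v1 /\ b = v2.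
Proof.
move=> Hab Hv E.
have Ha : a \in [set v1; v2] by rewrite -E set21.
have Hb : b \in [set v1; v2] by rewrite -E set22.
have H1 : v1 \in [set a; b] by rewrite E set21.
rewrite !in_set2 in Ha Hb H1.
case/orP: Ha => /eqP ?; case/orP: Hb => /eqP ?; case/orP: H1 => /eqP ?; subst => //; lia.
Qed.

Lemma crossesE k (a b c d : 'I_k) : (a < b)%N -> (c < d)%N ->
  crosses [set a; b] [set c; d] =
  ((a < c < b)%N && (b < d)%N) || ((c < a < d)%N && (d < b)%N).
Proof.
move=> Hab Hcd; apply/existsP/idP.
  case=> v1 /existsP[v2 /existsP[w1 /existsP[w2 /and5P[/eqP E1 /eqP E2 L1 L2 C]]]].
  by case: (set2eq Hab L1 E1) => -> ->; case: (set2eq Hcd L2 E2) => -> ->.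
move=> H; exists a; apply/existsP; exists b; apply/existsP; exists c; apply/existsP; exists d.
by rewrite !eqxx Hab Hcd H.
Qed.

Section Partner.
Variables (k : nat) (pi : {set {set 'I_k}}).
Hypothesis Hpi : pair_partition pi.

Definition pp (j : 'I_k) : 'I_k := odflt j [pick i in pblock pi j :\ j].

Lemma pi_triv : trivIset pi.
Proof. by case: Hpi => /and3P[]. Qed.
Lemma pi_cov j : j \in cover pi.
Proof. by case: Hpi => /and3P[/eqP -> _ _]; rewrite inE. Qed.
Lemma pb_in j : pblock pi j \in pi.
Proof. exact: pblock_mem (pi_cov j). Qed.
Lemma pb_mem j : j \in pblock pi j.
Proof. by rewrite mem_pblock pi_cov. Qed.
Lemma pb_card j : #|pblock pi j| = 2%N.
Proof. by case: Hpi => _ H; apply: H; apply: pb_in. Qed.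

Lemma pp_spec j : pp j \in pblock pi j /\ pp j != j.
Proof.
rewrite /pp; case: pickP => [i|H0] /=.
  by rewrite in_setD1 => /andP[-> ->].
have := pb_card j; rewrite (cardsD1 j) pb_mem (eq_card0 H0) //.
Qed.

Lemma ppn j : pp j != j. Proof. by case: (pp_spec j). Qed.

Lemma pb_eq j : pblock pi j = [set j; pp j].
Proof.
apply/eqP; rewrite eq_sym eqEcard subUset !sub1set pb_mem (proj1 (pp_spec j)) /=.
by rewrite pb_card cards2 eq_sym ppn.
Qed.

Lemma ppK j : pp (pp j) = j.
Proof.
have E : pblock pi (pp j) = pblock pi j by apply: same_pblock; [exact: pi_triv | case: (pp_spec j)].
have [H1 H2] := pp_spec (pp j); move: H1; rewrite E pb_eq in_set2 (negbTE H2) orbF.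
by move/eqP.
Qed.

Lemma blocksE : pi = [set [set a; pp a] | a in [set a : 'I_k | (a < pp a)%N]].
Proof.
apply/setP => B; apply/idP/imsetP.
  move=> HB; have : B != set0 by case: Hpi => /and3P[_ _ H0] _; apply: contraNneq H0 => <-.
  case/set0Pn => j Hj.
  have EB : B = [set j; pp j] by rewrite -pb_eq; apply/esym/def_pblock => //; exact: pi_triv.
  have Hne : (j : nat) != pp j by have := ppn j; rewrite eq_sym; apply: contra => /eqP E; apply/eqP/val_inj.
  case: (ltngtP j (pp j)) => Hlt.
  - by exists j; rewrite ?inE.
  - by exists (pp j); rewrite ?inE ppK // EB setUC.
  - by rewrite Hlt eqxx in Hne.
by case=> a _ ->; rewrite -pb_eq pb_in.
Qed.

Lemma blocks_inj : {in [set a : 'I_k | (a < pp a)%N] &, injective (fun a => [set a; pp a])}.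
Proof.
move=> a c; rewrite !inE => Ha Hc E.
by case: (set2eq Ha Hc E).
Qed.

Local Notation A := [set a : 'I_k | (a < pp a)%N].
Local Notation B := (fun a : 'I_k => [set a; pp a]).

Lemma crossesE' a c : a \in A -> c \in A -> crosses (B a) (B c) = Cr pp a c || Cr pp c a.
Proof. by rewrite !inE => Ha Hc; rewrite crossesE // /Cr !andbA. Qed.

Lemma cp_sum (g : {set 'I_k} -> {set 'I_k} -> nat) : (forall V W, g V W = g W V) ->
  (\sum_(VW in cross_pairs pi) g VW.1 VW.2 =
   2 * \sum_a \sum_(c | Cr pp a c) g (B a) (B c))%N.
Proof.
move=> Hg.
rewrite (eq_bigl (fun VW => (VW.1 \in pi) && ((VW.2 \in pi) && crosses VW.1 VW.2))); last first.
  by move=> VW; rewrite inE.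
rewrite -(pair_big_dep (fun V => V \in pi) (fun V W => (W \in pi) && crosses V W) (fun V W => g V W)) /=.
have inner : forall V, (\sum_(W | (W \in pi) && crosses V W) g V W =
    \sum_(c in A) (if crosses V (B c) then g V (B c) else 0))%N.
  by move=> V; rewrite big_mkcondr /= {1}blocksE big_imset //; exact: blocks_inj.
rewrite (eq_bigr _ (fun V _ => inner V)) {1}blocksE big_imset /=; last exact: blocks_inj.
set H := fun a c => if Cr pp a c then g (B a) (B c) else 0%N.
have E1 : (\sum_(a in A) \sum_(c in A) (if crosses (B a) (B c) then g (B a) (B c) else 0) =
          \sum_(a in A) \sum_(c in A) (H a c + H c a))%N.
  apply: eq_bigr => a Ha; apply: eq_bigr => c Hc; rewrite crossesE' // /H (Hg (B c)).
  case: (boolP (Cr pp a c)) => H1; case: (boolP (Cr pp c a)) => H2 //=; rewrite ?addn0 //.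
  by move: H1 H2; rewrite /Cr => /and3P[L1 _ _] /and3P[L2 _ _]; lia.
rewrite E1; under eq_bigr => a _ do rewrite big_split /=.
rewrite big_split /= [X in (_ + X)%N]exchange_big /= addnn -mul2n; congr (_ * _)%N.
rewrite big_mkcond; apply: eq_bigr => a _.
case: ifP => Ha.
  rewrite big_mkcond [RHS]big_mkcond; apply: eq_bigr => c _ /=; rewrite /H.
  case: ifP => // Hc; case: ifP => // /and3P[L1 L2 L3].
  by move: Hc; rewrite inE; lia.
symmetry; apply: big1 => c /and3P[L1 L2 L3].
by move: Ha; rewrite inE => /negbT; rewrite -leqNgt; lia.
Qed.
End Partner.


Lemma cnt k (P : pred 'I_k) : count P (enum 'I_k) = #|[set l | P l]|.
Proof. by rewrite cardsE cardE -size_filter enumT /enum_mem. Qed.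
Lemma ie k : index_enum 'I_k = enum 'I_k.
Proof. by rewrite [index_enum _]unlock enumT. Qed.
Lemma srt k : sorted (fun a b : 'I_k => (a < b)%N) (enum 'I_k).
Proof. by have := iota_ltn_sorted 0 k; rewrite -val_enum_ord sorted_map. Qed.

Lemma ntr_sign N m : (0 < N)%N -> ntr ((-1) ^+ m : 'M[algC]_N) = (-1) ^+ m.
Proof.
move=> HN.
have -> : ((-1) ^+ m : 'M[algC]_N) = ((-1) ^+ m : algC) *: 1%:M.
  by rewrite signZ; symmetry; apply: mulmx1.
by rewrite /ntr mxtraceZ mxtrace1 -mulrA mulfV ?mulr1 // pnatr_eq0 -lt0n.
Qed.

Unset Implicit Arguments.
Theorem lemma3p3 (n q k : nat) (alpha : 'I_k -> {set 'I_n}) :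
  ~~ odd n ->
  (1 <= q)%N -> (q <= n %/ 2)%N ->
  (forall j : 'I_k, #|alpha j| = q) ->
  (ker_blocks_even alpha ->
     Psi_alpha q alpha = 1%:M \/ Psi_alpha q alpha = - 1%:M) /\
  (forall pi : {set {set 'I_k}},
     pair_partition pi -> ker_ge alpha pi ->
     ntr (Psi_alpha q alpha) = (-1) ^+ (q * cr pi + cross_overlap alpha pi)).
Proof.
move=> Hn Hq1 Hqn Hcard.
pose x := fun j : 'I_k => (PsiR q (alpha j) : 'M[algC]_(2 ^ (n %/ 2))).
pose e := fun a c : 'I_k => (q + #|alpha a :&: alpha c|)%N.
have Hx2 : forall a, x a * x a = 1 := fun a => PsiR_sq Hn (Hcard a).
have Hc : forall a c, x a * x c = (-1) ^+ (e a c) * (x c * x a) :=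
  fun a c => PsiR_comm Hn (Hcard a) (Hcard c).
have HPsi : Psi_alpha q alpha = \prod_(j <- enum 'I_k) x j by rewrite /Psi_alpha -ie.
split.
  move=> Hev.
  have Hxeq : forall a b, alpha a = alpha b -> x a = x b by move=> a b E; rewrite /x E.
  have Hcnt : forall j, ~~ odd (count (fun l => alpha l == alpha j) (enum 'I_k)).
    by move=> j; rewrite cnt; apply: Hev.
  have [m Hm] := partA Hx2 Hc Hxeq Hcnt.
  rewrite HPsi Hm -signr_odd; case: (odd m); [right|left]; by [].
move=> pi Hpi Hker.
have Hpp := ppK Hpi; have Hpn := ppn Hpi.
have Hap : forall a, alpha (pp pi a) = alpha a.
  by move=> a; apply: (Hker _ (pb_in Hpi a)); [case: (pp_spec Hpi a) | apply: pb_mem].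
have Hxp : forall a, x (pp pi a) = x a by move=> a; rewrite /x Hap.
have Hep : forall a c, e a (pp pi c) = e a c by move=> a c; rewrite /e Hap.
have Hpw : pairwise (@ltO k) (enum 'I_k).
  by rewrite -sorted_pairwise ?srt //; exact: ltn_trans.
have Hprod := partB Hx2 Hc Hpp Hpn Hxp Hep Hpw (fun j _ => mem_enum _ _).
rewrite HPsi Hprod ntr_sign ?expn_gt0 //; congr (_ ^+ _).
have Hblk : forall a, alpha_blk alpha [set a; pp pi a] = alpha a.
  move=> a; rewrite /alpha_blk; case: pickP => [y|H0].
    by rewrite in_set2 => /orP[] /eqP ->; rewrite ?Hap.
  by have := H0 a; rewrite set21.
have Hcr : cr pi = (\sum_a \sum_(c | Cr (pp pi) a c) 1)%N.
  rewrite /cr -sum1_card (@cp_sum _ _ Hpi (fun _ _ => 1%N)) // mulKn //.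
have Hov : cross_overlap alpha pi = (\sum_a \sum_(c | Cr (pp pi) a c) #|alpha a :&: alpha c|)%N.
  rewrite /cross_overlap (@cp_sum _ _ Hpi (fun V W => #|alpha_blk alpha V :&: alpha_blk alpha W|)); last first.
    by move=> V W; rewrite setIC.
  rewrite mulKn //; apply: eq_bigr => a _; apply: eq_bigr => c _; by rewrite !Hblk.
rewrite Hcr Hov /Nsum -ie big_distrr -big_split; apply: eq_bigr => a _.
rewrite big_distrr -big_split; apply: eq_bigr => c _; by rewrite /e /= muln1.
Qed.
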